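(* Let $A, C, D$ be binary random variables, with $A$ taking values $a,\overline{a}$, $C$ taking values $c,\overline{c}$, $D$ taking values $d,\overline{d}$, and let $Y$ be a real random variable with finite expectation. Suppose the joint distribution factorizes as \[ p(A,C,D,Y)=p(D)\,p(C\mid D)\,p(A\mid C)\,p(Y\mid A,C). \] Assume that $C$ and $D$ are dependent, and that every event $\{A=x, C=y, D=z\}$ has positive probability. If $E[Y\mid A,C]$ and $E[A\mid C]$ are both nondecreasing or both nonincreasing in $C$, then $E[Y\mid A,D]$ and $E[A\mid D]$ are both nondecreasing or both nonincreasing in $D$. If $E[Y\mid A,C]$ and $E[A\mid C]$ are one nondecreasing and the other nonincreasing in $C$, then $E[Y\mid A,D]$ and $E[A\mid D]$ are one nondecreasing and the other nonincreasing in $D$.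
   Context: $E[Y\mid A,C]$ is nondecreasing in $C$ if $E[Y\mid a,c]\ge E[Y\mid a,\overline{c}]$ and $E[Y\mid \overline{a},c]\ge E[Y\mid \overline{a},\overline{c}]$, nonincreasing if both inequalities are reversed; analogously for $D$. With $a=1,\overline{a}=0$, $E[A\mid C]=p(a\mid C)$ is nondecreasing in $C$ if $p(a\mid c)\ge p(a\mid\overline{c})$ and nonincreasing if $p(a\mid c)\le p(a\mid\overline{c})$; analogously for $D$. *)

(* Defs.v *)
From HB Require Import structures.
From mathcomp Require Import all_boot all_order all_algebra.
From mathcomp Require Import all_classical all_reals all_analysis.
Set Implicit Arguments. Unset Strict Implicit. Unset Printing Implicit Defensive.
Import Order.TTheory GRing.Theory Num.Theory.
Local Open Scope classical_set_scope.
Local Open Scope ring_scope.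

Section Defs.
Context (d : measure_display) (T : measurableType d) (R : realType)
        (P : probability T R).

Definition ev (X : T -> bool) (x : bool) : set T := X @^-1` [set x].

Definition prob (S : set T) : R := fine (P S).

Definition cprob (S B : set T) : R := prob (S `&` B) / prob B.

Definition cexp (Y : T -> R) (B : set T) : R :=
  fine (\int[P]_(t in B) (Y t)%:E) / prob B.

(* Convention: for a binary variable, the value "a" is [true] and
   "abar" is [false]. *)

Definition EY_nondec (Y : T -> R) (X Z : T -> bool) : Prop :=
  forall x, cexp Y (ev X x `&` ev Z false) <= cexp Y (ev X x `&` ev Z true).

Definition EY_noninc (Y : T -> R) (X Z : T -> bool) : Prop :=
  forall x, cexp Y (ev X x `&` ev Z true) <= cexp Y (ev X x `&` ev Z false).

(* E[X | Z] = p(X = a | Z) is nondecreasing in Z *)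
Definition EA_nondec (X Z : T -> bool) : Prop :=
  cprob (ev X true) (ev Z false) <= cprob (ev X true) (ev Z true).

Definition EA_noninc (X Z : T -> bool) : Prop :=
  cprob (ev X true) (ev Z true) <= cprob (ev X true) (ev Z false).

End Defs.

(* Main.v *)
Require Import Defs.
From HB Require Import structures.
From mathcomp Require Import all_boot all_order all_algebra.
From mathcomp Require Import all_classical all_reals all_analysis.
From mathcomp Require Import measurable_realfun ring lra.
Import Order.TTheory GRing.Theory Num.Theory.
Local Open Scope classical_set_scope.
Local Open Scope ring_scope.
Import HBNNSimple.
Set Implicit Arguments. Unset Strict Implicit.

Section S.
Local Open Scope ereal_scope.
Context d (T : measurableType d) (R : realType) (m : {measure set T -> \bar R}).
Variables (S : set T) (mS : measurable S).

Let nns (h : {nnsfun T >-> R}) :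
  \int[mrestr m mS]_(x in setT) (h x)%:E = \int[m]_(x in S) (h x)%:E.
Proof.
under [LHS]eq_integral do rewrite fimfunE -fsumEFin//.
rewrite [LHS]ge0_integral_fsum//; last 2 first.
  - by move=> r; exact/measurable_EFinP/measurableT_comp.
  - by move=> n x _; rewrite EFinM nnfun_muleindic_ge0.
under [RHS]eq_integral do rewrite fimfunE -fsumEFin//.
rewrite [RHS]ge0_integral_fsum//; last 2 first.
  - by move=> r; exact/measurable_EFinP/measurableT_comp.
  - by move=> n x _; rewrite EFinM nnfun_muleindic_ge0.
apply: eq_fsbigr => r _.
by rewrite !integralZl_indic_nnsfun// !integral_indic// /mrestr setIT.
Qed.

Lemma ge0_integral_mrestr (f : T -> \bar R) (mf : measurable_fun setT f) :
  (forall x, 0 <= f x) ->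
  \int[mrestr m mS]_(x in setT) f x = \int[m]_(x in S) f x.
Proof.
move=> f0; pose f_ := nnsfun_approx measurableT mf.
transitivity (limn (fun n => \int[mrestr m mS]_(x in setT) (f_ n x)%:E)).
  rewrite -monotone_convergence//=.
  - apply: eq_integral => x /[!inE] xD; apply/esym/cvg_lim => //=.
    exact: cvg_nnsfun_approx.
  - by move=> n; apply: measurableT_comp => //.
  - by move=> n x _; rewrite lee_fin.
  - by move=> x _ a b ab; rewrite lee_fin//; exact/lefP/nd_nnsfun_approx.
rewrite (_ : \int[m]_(x in S) _ =
    limn (fun n => \int[m]_(x in S) (f_ n x)%:E)); last first.
  rewrite -monotone_convergence//=.
  - apply: eq_integral => x /[!inE] xD; apply/esym/cvg_lim => //.
    exact: cvg_nnsfun_approx.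
  - by move=> n; exact/measurable_EFinP/measurable_funTS.
  - by move=> n x _; rewrite lee_fin.
  - by move=> x _ a b ab; rewrite lee_fin//; exact/lefP/nd_nnsfun_approx.
by congr (limn _); apply/funext => n /=; rewrite nns.
Qed.
End S.

Section S2.
Local Open Scope ereal_scope.
Context d (T : measurableType d) (R : realType) (m : {measure set T -> \bar R}).
Variables (Y : T -> R) (mY : measurable_fun setT Y).

Lemma scale_ge0 (S1 S2 : set T) (mS1 : measurable S1) (mS2 : measurable S2)
  (k : R) (k0 : (0 <= k)%R)
  (hyp : forall B, measurable B -> m (S1 `&` Y @^-1` B) = k%:E * m (S2 `&` Y @^-1` B))
  (g : R -> \bar R) (mg : measurable_fun setT g) (g0 : forall r, 0 <= g r) :
  \int[m]_(x in S1) g (Y x) = k%:E * \int[m]_(x in S2) g (Y x).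
Proof.
have mgY : measurable_fun setT (g \o Y) by exact: measurableT_comp.
have h1 := (@ge0_integral_mrestr _ _ _ m _ mS1 _ mgY (fun x => g0 (Y x))).
have h2 := (@ge0_integral_mrestr _ _ _ m _ mS2 _ mgY (fun x => g0 (Y x))).
rewrite -[LHS]h1 -[in RHS]h2.
have E S (mS : measurable S) : \int[mrestr m mS]_(x in setT) g (Y x) =
   \int[pushforward (mrestr m mS) Y]_(r in setT) g r.
  by rewrite (ge0_integral_pushforward mY) //.
rewrite !E.
rewrite (eq_measure_integral (mscale (NngNum k0) (pushforward (mrestr m mS2) Y))); last first.
  move=> A mA _; rewrite /pushforward /mrestr /=; unfold mscale; rewrite /pushforward /mrestr /= setIC hyp // setIC //.
exact: (@ge0_integral_mscale _ _ _ (pushforward (mrestr m mS2) Y) setT measurableT (NngNum k0) g mg (fun x _ => g0 x)).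
Qed.
End S2.

Section S3.
Context d (T : measurableType d) (R : realType) (m : {measure set T -> \bar R}).
Variables (Y : T -> R) (mY : measurable_fun setT Y)
  (iY : m.-integrable setT (EFin \o Y)).

Lemma scale_real (S1 S2 : set T) (mS1 : measurable S1) (mS2 : measurable S2)
  (k : R) (k0 : (0 <= k)%R)
  (hyp : forall B, measurable B -> m (S1 `&` Y @^-1` B) = (k%:E * m (S2 `&` Y @^-1` B))%E) :
  fine (\int[m]_(x in S1) (Y x)%:E) = k * fine (\int[m]_(x in S2) (Y x)%:E).
Proof.
have mp : measurable_fun setT ((@EFin R)^\+)%E.
  by apply: measurable_funepos; exact: EFin_measurable.
have mn : measurable_fun setT ((@EFin R)^\-)%E.
  by apply: measurable_funeneg; exact: EFin_measurable.
have iS2 : m.-integrable S2 (EFin \o Y) by apply: (integrableS measurableT).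
have fa : (\int[m]_(x in S2) ((EFin \o Y)^\+ x))%E \is a fin_num.
  exact/integrable_fin_num/integrable_funepos.
have fb : (\int[m]_(x in S2) ((EFin \o Y)^\- x))%E \is a fin_num.
  exact/integrable_fin_num/integrable_funeneg.
rewrite [in LHS]integralE [in RHS]integralE.
rewrite funepos_comp funeneg_comp.
rewrite funepos_comp funeneg_comp in fa fb.
rewrite (@scale_ge0 _ _ _ m Y mY _ _ mS1 mS2 k k0 hyp _ mp); last by move=> r; exact: funepos_ge0.
rewrite (@scale_ge0 _ _ _ m Y mY _ _ mS1 mS2 k k0 hyp _ mn); last by move=> r; exact: funeneg_ge0.
rewrite -(fineK fa) -(fineK fb) -!EFinM -EFinB /=.
by rewrite mulrBr.
Qed.
End S3.

Section H.
Context d (T : measurableType d) (R : realType) (P : probability T R).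

Lemma pfin S : measurable S -> P S \is a fin_num.
Proof.
move=> mS; rewrite ge0_fin_numE ?measure_ge0//.
by apply: (le_lt_trans (probability_le1 P mS)); rewrite ltry.
Qed.

Lemma probE S : measurable S -> P S = (prob P S)%:E.
Proof. by move=> mS; rewrite /prob fineK// pfin. Qed.

Lemma prob_ge0 S : 0 <= prob P S.
Proof. exact/fine_ge0/measure_ge0. Qed.

Lemma split_set (S : set T) (X : T -> bool) :
  S = (S `&` ev X true) `|` (S `&` ev X false).
Proof.
apply/seteqP; split => t /=; rewrite /ev /=.
  by case: (X t) => St; [left|right].
by case=> -[].
Qed.

Lemma split_disj (S : set T) (X : T -> bool) :
  [disjoint S `&` ev X true & S `&` ev X false].
Proof.
apply/disj_setPS => t [[_]]; rewrite /ev /= => -> [_]; done.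
Qed.

Lemma prob_split S (X : T -> bool) (mX : forall b, measurable (ev X b)) :
  measurable S -> prob P S = prob P (S `&` ev X true) + prob P (S `&` ev X false).
Proof.
move=> mS; rewrite {1}(split_set S X) /prob measureU//; last 3 first.
- exact: measurableI.
- exact: measurableI.
- by apply/seteqP; split => t //; rewrite /ev/= => -[[_ ->] [_]].
by rewrite fineD// pfin//; exact: measurableI.
Qed.

Lemma prob_setT : prob P setT = 1.
Proof. by rewrite /prob probability_setT. Qed.

Lemma prob_pos S S' : measurable S -> measurable S' -> S' `<=` S ->
  (0 < P S')%E -> 0 < prob P S.
Proof.
move=> mS mS' SS' h; rewrite /prob fine_gt0// (lt_le_trans h) ?le_measure ?inE//=.
by rewrite -ge0_fin_numE ?measure_ge0// pfin.
Qed.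

Variables (Y : T -> R) (iY : P.-integrable setT (EFin \o Y)).

Lemma int_split S (X : T -> bool) (mX : forall b, measurable (ev X b)) :
  measurable S ->
  fine (\int[P]_(t in S) (Y t)%:E) =
  fine (\int[P]_(t in S `&` ev X true) (Y t)%:E) + fine (\int[P]_(t in S `&` ev X false) (Y t)%:E).
Proof.
move=> mS.
have := @Rintegral_setU _ _ _ P (S `&` ev X true) (S `&` ev X false) Y.
rewrite /Rintegral -split_set; apply.
- exact: measurableI.
- exact: measurableI.
- exact: integrableS iY.
- exact: split_disj.
Qed.
End H.

Lemma L1 (R : realFieldType) (a1 b1 a0 b0 m1 m0 : R) :
  0 < a1 -> 0 < b1 -> 0 < a0 -> 0 < b0 ->
  0 <= (m1 - m0) * (a1 * b0 - b1 * a0) ->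
  (a0 * m1 + b0 * m0) / (a0 + b0) <= (a1 * m1 + b1 * m0) / (a1 + b1).
Proof.
move=> ha1 hb1 ha0 hb0 h.
rewrite ler_pdivrMr ?addr_gt0 // mulrAC ler_pdivlMr ?addr_gt0 //.
nra.
Qed.


Unset Implicit Arguments. Set Strict Implicit.

Theorem theorem8 (d : measure_display) (T : measurableType d) (R : realType)
  (P : probability T R) (A C D : T -> bool) (Y : T -> R)
  (mA : forall x, measurable (ev A x))
  (mC : forall y, measurable (ev C y))
  (mD : forall z, measurable (ev D z))
  (mY : measurable_fun setT Y)
  (iY : P.-integrable setT (EFin \o Y))
  (* p(A,C,D,Y) = p(D) p(C|D) p(A|C) p(Y|A,C) *)
  (fact : forall (x y z : bool) (B : set R), measurable B ->
     prob P (ev A x `&` ev C y `&` ev D z `&` Y @^-1` B) =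
     prob P (ev D z) * cprob P (ev C y) (ev D z) * cprob P (ev A x) (ev C y)
       * cprob P (Y @^-1` B) (ev A x `&` ev C y))
  (* C and D are dependent *)
  (dep : ~ (forall y z : bool,
       prob P (ev C y `&` ev D z) = prob P (ev C y) * prob P (ev D z)))
  (* every event {A = x, C = y, D = z} has positive probability *)
  (pos : forall x y z : bool, (0 < P (ev A x `&` ev C y `&` ev D z))%E) :
  ((EY_nondec P Y A C /\ EA_nondec P A C) \/ (EY_noninc P Y A C /\ EA_noninc P A C) ->
   (EY_nondec P Y A D /\ EA_nondec P A D) \/ (EY_noninc P Y A D /\ EA_noninc P A D))
  /\
  ((EY_nondec P Y A C /\ EA_noninc P A C) \/ (EY_noninc P Y A C /\ EA_nondec P A C) ->
   (EY_nondec P Y A D /\ EA_noninc P A D) \/ (EY_noninc P Y A D /\ EA_nondec P A D)).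
Proof.
have mAC x y : measurable (ev A x `&` ev C y) by exact: measurableI.
have mAD x z : measurable (ev A x `&` ev D z) by exact: measurableI.
have mCD y z : measurable (ev C y `&` ev D z) by exact: measurableI.
have mE x y z : measurable (ev A x `&` ev C y `&` ev D z) by exact: measurableI.
have qpos x y z : 0 < prob P (ev A x `&` ev C y `&` ev D z).
  exact: (prob_pos (mE x y z) (mE x y z) (@subset_refl _ _) (pos x y z)).
have pAC x y : 0 < prob P (ev A x `&` ev C y).
  by apply: (prob_pos (mAC x y) (mE x y true) _ (pos x y true)) => t [].
have pD z : 0 < prob P (ev D z).
  by apply: (prob_pos (mD z) (mE true true z) _ (pos true true z)) => t [].
have pC y : 0 < prob P (ev C y).
  by apply: (prob_pos (mC y) (mE true y true) _ (pos true y true)) => t [[]].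
have pAD x z : 0 < prob P (ev A x `&` ev D z).
  by apply: (prob_pos (mAD x z) (mE x true z) _ (pos x true z)) => t [[]].
have pCD y z : 0 < prob P (ev C y `&` ev D z).
  by apply: (prob_pos (mCD y z) (mE true y z) _ (pos true y z)) => t [[]].
have qF x y z : prob P (ev A x `&` ev C y `&` ev D z) =
   prob P (ev D z) * cprob P (ev C y) (ev D z) * cprob P (ev A x) (ev C y).
  have := fact x y z setT measurableT; rewrite preimage_setT setIT => ->.
  by rewrite /cprob setTI divff ?mulr1 // gt_eqF.
have IIE x y z : fine (\int[P]_(t in ev A x `&` ev C y `&` ev D z) (Y t)%:E) =
    prob P (ev A x `&` ev C y `&` ev D z) * cexp P Y (ev A x `&` ev C y).
  rewrite (@scale_real _ _ _ P Y mY iY _ _ (mE x y z) (mAC x y)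
     (prob P (ev A x `&` ev C y `&` ev D z) / prob P (ev A x `&` ev C y))).
  - by rewrite /cexp; ring.
  - by rewrite divr_ge0 // ltW.
  move=> B mB.
  have mYB : measurable (Y @^-1` B) by rewrite -[Y @^-1` _]setTI; exact: mY.
  have h1 := probE P (measurableI _ _ (mE x y z) mYB).
  have h2 : P (ev A x `&` ev C y `&` Y @^-1` B) = (prob P (ev A x `&` ev C y `&` Y @^-1` B))%:E.
    exact: (probE P (measurableI _ _ (mAC x y) mYB)).
  apply: (eq_trans h1).
  transitivity ((prob P (ev A x `&` ev C y `&` ev D z) / prob P (ev A x `&` ev C y)
     * prob P (ev A x `&` ev C y `&` Y @^-1` B))%:E); last first.
    by rewrite EFinM; congr (_ * _)%E; exact/esym/h2.
  congr (_%:E).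
  rewrite fact // /cprob qF (setIC (Y @^-1` B)) /cprob; ring.
have cAD x z : cexp P Y (ev A x `&` ev D z) =
   (prob P (ev A x `&` ev C true `&` ev D z) * cexp P Y (ev A x `&` ev C true) +
    prob P (ev A x `&` ev C false `&` ev D z) * cexp P Y (ev A x `&` ev C false)) /
   (prob P (ev A x `&` ev C true `&` ev D z) + prob P (ev A x `&` ev C false `&` ev D z)).
  rewrite /cexp (int_split iY mC (mAD x z)) (prob_split P mC (mAD x z)).
  by rewrite !(setIAC (ev A x) (ev D z)) !IIE.
have cAD' z : cprob P (ev A true) (ev D z) =
   (prob P (ev A true `&` ev C true `&` ev D z) + prob P (ev A true `&` ev C false `&` ev D z))
   / prob P (ev D z).
  by rewrite /cprob (prob_split P mC (mAD true z)) !(setIAC (ev A true) (ev D z)).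
have vsum z : cprob P (ev C true) (ev D z) + cprob P (ev C false) (ev D z) = 1.
  rewrite /cprob -mulrDl !(setIC (ev C _)) -(prob_split P mC (mD z)).
  by rewrite divff // gt_eqF.
have pyz y z : prob P (ev C y `&` ev D z) = cprob P (ev C y) (ev D z) * prob P (ev D z).
  by rewrite /cprob divfK // gt_eqF.
have pDsum : prob P (ev D true) + prob P (ev D false) = 1.
  by rewrite -[RHS](prob_setT P) (prob_split P mD measurableT) !setTI.
have dep' : cprob P (ev C true) (ev D true) != cprob P (ev C true) (ev D false).
  apply/negP => /eqP h; apply: dep => y z.
  have hv y' : cprob P (ev C y') (ev D true) = cprob P (ev C y') (ev D false).
    case: y' => //.
    by apply/(@addrI _ (cprob P (ev C true) (ev D true))); rewrite vsum h vsum.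
  have key z' : prob P (ev C y) = cprob P (ev C y) (ev D z').
    rewrite (prob_split P mD (mC y)) !pyz (hv y) -mulrDr pDsum mulr1.
    by case: z' => //; rewrite hv.
  by rewrite pyz (key z).
have vf z : cprob P (ev C false) (ev D z) = 1 - cprob P (ev C true) (ev D z).
  by rewrite -(vsum z); ring.
have upos x y : 0 < cprob P (ev A x) (ev C y) by rewrite divr_gt0.
have key x : prob P (ev A x `&` ev C true `&` ev D true) * prob P (ev A x `&` ev C false `&` ev D false)
  - prob P (ev A x `&` ev C false `&` ev D true) * prob P (ev A x `&` ev C true `&` ev D false)
  = (prob P (ev D true) * prob P (ev D false) * cprob P (ev A x) (ev C true) * cprob P (ev A x) (ev C false))
    * (cprob P (ev C true) (ev D true) - cprob P (ev C true) (ev D false)).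
  by rewrite !qF !vf; ring.
have cpos x : 0 < prob P (ev D true) * prob P (ev D false) * cprob P (ev A x) (ev C true) * cprob P (ev A x) (ev C false).
  by do 3 (apply: mulr_gt0 => //).
have TY1 x : 0 <= (cexp P Y (ev A x `&` ev C true) - cexp P Y (ev A x `&` ev C false)) *
    (cprob P (ev C true) (ev D true) - cprob P (ev C true) (ev D false)) ->
    cexp P Y (ev A x `&` ev D false) <= cexp P Y (ev A x `&` ev D true).
  move=> h; rewrite !cAD; apply: L1 => //.
  rewrite key mulrCA; exact: mulr_ge0 (ltW (cpos x)) h.
have TY2 x : (cexp P Y (ev A x `&` ev C true) - cexp P Y (ev A x `&` ev C false)) *
    (cprob P (ev C true) (ev D true) - cprob P (ev C true) (ev D false)) <= 0 ->
    cexp P Y (ev A x `&` ev D true) <= cexp P Y (ev A x `&` ev D false).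
  move=> h; rewrite !cAD; apply: L1 => //.
  have -> : prob P (ev A x `&` ev C true `&` ev D false) * prob P (ev A x `&` ev C false `&` ev D true)
    - prob P (ev A x `&` ev C false `&` ev D false) * prob P (ev A x `&` ev C true `&` ev D true)
    = - (prob P (ev A x `&` ev C true `&` ev D true) * prob P (ev A x `&` ev C false `&` ev D false)
    - prob P (ev A x `&` ev C false `&` ev D true) * prob P (ev A x `&` ev C true `&` ev D false)) by ring.
  rewrite key mulrN mulrCA -mulrN; apply: mulr_ge0 (ltW (cpos x)) _.
  by rewrite oppr_ge0.
have TA : cprob P (ev A true) (ev D true) - cprob P (ev A true) (ev D false) =
   (cprob P (ev C true) (ev D true) - cprob P (ev C true) (ev D false)) *
   (cprob P (ev A true) (ev C true) - cprob P (ev A true) (ev C false)).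
  rewrite !cAD' !qF !vf.
  have w1 := pD true; have w0 := pD false.
  by field; rewrite !gt_eqF.
rewrite /EY_nondec /EY_noninc /EA_nondec /EA_noninc.
move: TA TY1 TY2 dep'.
set vt := cprob P (ev C true) (ev D true).
set vf' := cprob P (ev C true) (ev D false).
set at_ := cprob P (ev A true) (ev C true).
set af := cprob P (ev A true) (ev C false).
set bt := cprob P (ev A true) (ev D true).
set bf := cprob P (ev A true) (ev D false).
move=> TA TY1 TY2 dep'.
have [hlt|hgt] : vt < vf' \/ vf' < vt.
  by move: dep'; rewrite neq_lt => /orP.
- split => -[[hY hA]|[hY hA]].
  + right; split.
      move=> x; apply: TY2; have := hY x; nra.
    rewrite -subr_ge0 -opprB TA oppr_ge0; nra.
  + left; split.
      move=> x; apply: TY1; have := hY x; nra.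
    rewrite -subr_ge0 TA; nra.
  + right; split.
      move=> x; apply: TY2; have := hY x; nra.
    rewrite -subr_ge0 TA; nra.
  + left; split.
      move=> x; apply: TY1; have := hY x; nra.
    rewrite -subr_ge0 -opprB TA oppr_ge0; nra.
- split => -[[hY hA]|[hY hA]].
  + left; split.
      move=> x; apply: TY1; have := hY x; nra.
    rewrite -subr_ge0 TA; nra.
  + right; split.
      move=> x; apply: TY2; have := hY x; nra.
    rewrite -subr_ge0 -opprB TA oppr_ge0; nra.
  + left; split.
      move=> x; apply: TY1; have := hY x; nra.
    rewrite -subr_ge0 -opprB TA oppr_ge0; nra.
  + right; split.
      move=> x; apply: TY2; have := hY x; nra.
    rewrite -subr_ge0 TA; nra.
Qed.
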